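(* Let $R$ be a Noetherian ring, let $I$ be a proper ideal of $R$, and let $n$ be an integer with $n\geq \operatorname{ara}(I)$. If every $(n+1)$-generated ideal $J\subseteq I$ with $\sqrt{J}=\sqrt{I}$ has an $n$-generated reduction, then $I$ has an $n$-generated reduction.
   Context: The arithmetic rank $\operatorname{ara}(I)$ of a proper ideal $I$ of a Noetherian ring $R$ is the least number $n$ such that $\sqrt{I}=\sqrt{(x_1,\ldots,x_n)R}$ for some $x_1,\ldots,x_n\in I$. A reduction of an ideal $I$ is an ideal $J\subseteq I$ such that $I^{m+1}=JI^m$ for some $m>0$; it is $n$-generated if it can be generated by $n$ elements. *)

(* Defs.v *)
From mathcomp Require Import all_boot all_algebra.
Set Implicit Arguments. Unset Strict Implicit. Unset Printing Implicit Defensive.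
Import GRing.Theory.
Local Open Scope ring_scope.

Section Ideals.
Variable R : comNzRingType.

Definition subI (I J : R -> Prop) : Prop := forall x, I x -> J x.
Definition eqI (I J : R -> Prop) : Prop := forall x, I x <-> J x.

Definition is_ideal (I : R -> Prop) : Prop :=
  [/\ I 0, (forall x y, I x -> I y -> I (x + y)) & (forall a x, I x -> I (a * x))].

Definition proper_ideal (I : R -> Prop) : Prop := is_ideal I /\ ~ I 1.

Definition noetherian : Prop :=
  forall f : nat -> R -> Prop,
    (forall k, is_ideal (f k)) -> (forall k, subI (f k) (f k.+1)) ->
    exists N, forall k, (N <= k)%N -> eqI (f k) (f N).

Definition gen_ideal (n : nat) (g : 'I_n -> R) : R -> Prop :=
  fun x => exists c : 'I_n -> R, x = \sum_(i < n) c i * g i.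

Definition n_generated (n : nat) (J : R -> Prop) : Prop :=
  exists g : 'I_n -> R, eqI J (gen_ideal g).

Definition rad (I : R -> Prop) : R -> Prop := fun x => exists k : nat, I (x ^+ k).

Definition prod_ideal (I J : R -> Prop) : R -> Prop :=
  fun x => exists k (a b : 'I_k -> R),
    (forall i, I (a i)) /\ (forall i, J (b i)) /\ x = \sum_(i < k) a i * b i.

Fixpoint pow_ideal (I : R -> Prop) (m : nat) : R -> Prop :=
  match m with
  | O => fun _ => True
  | S m' => prod_ideal I (pow_ideal I m')
  end.

Definition is_reduction (J I : R -> Prop) : Prop :=
  subI J I /\ exists m : nat, (0 < m)%N /\ eqI (pow_ideal I m.+1) (prod_ideal J (pow_ideal I m)).

Definition has_n_gen_reduction (n : nat) (I : R -> Prop) : Prop :=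
  exists J, is_ideal J /\ n_generated n J /\ is_reduction J I.

Definition ara_le (I : R -> Prop) (n : nat) : Prop :=
  exists m : nat, (m <= n)%N /\ exists x : 'I_m -> R,
    (forall i, I (x i)) /\ eqI (rad I) (rad (gen_ideal x)).

End Ideals.

(* Main.v *)
Require Import Defs.
From mathcomp Require Import all_boot all_algebra.
Require Import Defs.
From Stdlib Require Import ClassicalEpsilon FunctionalExtensionality PropExtensionality Classical.
Unset Implicit Arguments. Unset Printing Implicit Defensive.
Import GRing.Theory.
Local Open Scope ring_scope.

Section Aux.
Context {R : comNzRingType}.
Implicit Types A B C I J K L M : R -> Prop.

Lemma eqIP A B : eqI A B -> A = B.
Proof. move=> h; apply: functional_extensionality => x; apply: propositional_extensionality; exact: h. Qed.

Lemma subII A B : subI A B -> subI B A -> A = B.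
Proof. by move=> h1 h2; apply: eqIP => x; split; [apply: h1|apply: h2]. Qed.

Lemma subI_trans A B C : subI A B -> subI B C -> subI A C.
Proof. by move=> h1 h2 x /h1 /h2. Qed.

Definition sumI A B : R -> Prop := fun z => exists a b, A a /\ B b /\ z = a + b.
Definition prin (y : R) : R -> Prop := fun z => exists r, z = r * y.
Definition TT : R -> Prop := fun _ => True.

Lemma prod0 A B : prod_ideal A B 0.
Proof.
exists 0%N, (fun _ => 0), (fun _ => 0); split; [|split]; try by move=> [i]; rewrite ltn0.
by rewrite big_ord0.
Qed.

Lemma prod_add A B u v : prod_ideal A B u -> prod_ideal A B v -> prod_ideal A B (u + v).
Proof.
move=> [k1 [a1 [b1 [ha1 [hb1 ->]]]]] [k2 [a2 [b2 [ha2 [hb2 ->]]]]].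
exists (k1 + k2)%N, (fun i => match split i with inl j => a1 j | inr j => a2 j end),
  (fun i => match split i with inl j => b1 j | inr j => b2 j end).
split; [|split].
- by move=> i; case: (split i).
- by move=> i; case: (split i).
- rewrite big_split_ord /=; congr (_ + _); apply: eq_bigr => i _.
  + by rewrite (unsplitK (inl _ i) : split (lshift k2 i) = inl i).
  + by rewrite (unsplitK (inr _ i) : split (rshift k1 i) = inr i).
Qed.

Lemma prod_mem A B a b : A a -> B b -> prod_ideal A B (a * b).
Proof.
move=> ha hb; exists 1%N, (fun _ => a), (fun _ => b); split; [by []|split; first by []].
by rewrite big_ord1.
Qed.

Lemma prod_ind A B (T : R -> Prop) : T 0 -> (forall u v, T u -> T v -> T (u + v)) ->
  (forall a b, A a -> B b -> T (a * b)) -> forall x, prod_ideal A B x -> T x.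
Proof.
move=> h0 hD hM x [k [a [b [ha [hb ->]]]]].
by apply: (big_ind T) => // i _; apply: hM.
Qed.

Lemma prod_mono A A' B B' : subI A A' -> subI B B' -> subI (prod_ideal A B) (prod_ideal A' B').
Proof.
move=> hA hB x [k [a [b [ha [hb ->]]]]].
by exists k, a, b; split; [move=> i; apply: hA|split; [move=> i; apply: hB|]].
Qed.

Lemma prod_comm_sub A B : subI (prod_ideal A B) (prod_ideal B A).
Proof.
apply: prod_ind; [exact: prod0|exact: prod_add|].
by move=> a b ha hb; rewrite mulrC; apply: prod_mem.
Qed.

Lemma prod_comm A B : prod_ideal A B = prod_ideal B A.
Proof. by apply: subII; apply: prod_comm_sub. Qed.

Lemma prod_assoc_sub A B C :
  subI (prod_ideal (prod_ideal A B) C) (prod_ideal A (prod_ideal B C)).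
Proof.
apply: prod_ind; [exact: prod0|exact: prod_add|].
move=> u c hu hc; move: u hu.
apply: (prod_ind _ _ (fun u => prod_ideal A (prod_ideal B C) (u * c))).
- by rewrite mul0r; apply: prod0.
- by move=> u v hu hv; rewrite mulrDl; apply: prod_add.
- by move=> a b ha hb; rewrite -mulrA; apply: prod_mem => //; apply: prod_mem.
Qed.

Lemma prod_assoc A B C :
  prod_ideal (prod_ideal A B) C = prod_ideal A (prod_ideal B C).
Proof.
apply: subII; first exact: prod_assoc_sub.
rewrite (prod_comm A); eapply subI_trans; first exact: (prod_assoc_sub B C A).
rewrite (prod_comm B); eapply subI_trans; first exact: (prod_assoc_sub C A B).
by rewrite (prod_comm C).
Qed.

Lemma prod_ideal_is A B : is_ideal A -> is_ideal (prod_ideal A B).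
Proof.
move=> [hA0 hAD hAM]; split; [exact: prod0|exact: prod_add|].
move=> c; apply: (prod_ind _ _ (fun u => prod_ideal A B (c * u))).
- by rewrite mulr0; apply: prod0.
- by move=> u v hu hv; rewrite mulrDr; apply: prod_add.
- by move=> a b ha hb; rewrite mulrA; apply: prod_mem => //; apply: hAM.
Qed.

Lemma TT_ideal : is_ideal TT.
Proof. by []. Qed.

Lemma prod_TT_l A : is_ideal A -> prod_ideal TT A = A.
Proof.
move=> [hA0 hAD hAM]; apply: subII.
- by apply: prod_ind => // a b _ hb; apply: hAM.
- by move=> x hx; rewrite -(mul1r x); apply: prod_mem.
Qed.

Lemma prod_in_l A B : is_ideal A -> subI (prod_ideal A B) A.
Proof.
move=> [hA0 hAD hAM]; apply: prod_ind => // a b ha _; rewrite mulrC; exact: hAM.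
Qed.

Lemma pow_ideal_is M j : is_ideal M -> is_ideal (pow_ideal M j).
Proof. by move=> hM; case: j => [|j] //=; apply: prod_ideal_is. Qed.

Lemma pow_mono J M j : subI J M -> subI (pow_ideal J j) (pow_ideal M j).
Proof.
move=> h; elim: j => [|j IH] //=; exact: prod_mono.
Qed.

Lemma pow_add_sub M a b : is_ideal M ->
  subI (prod_ideal (pow_ideal M a) (pow_ideal M b)) (pow_ideal M (a + b)).
Proof.
move=> hM; elim: a => [|a IH] /=.
  by rewrite prod_TT_l // ; apply: pow_ideal_is.
by rewrite prod_assoc; apply: prod_mono.
Qed.

Lemma pow_mem A x j : A x -> pow_ideal A j (x ^+ j).
Proof. by move=> hx; elim: j => [|j IH] //=; rewrite exprS; apply: prod_mem. Qed.

Lemma red_trans K J M : is_ideal M -> is_reduction J M -> is_reduction K J ->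
  is_reduction K M.
Proof.
move=> hM [hJM [b [b0 /eqIP hb]]] [hKJ [a [a0 /eqIP ha]]].
have powJ : forall j, subI (pow_ideal M (b + j)) (prod_ideal (pow_ideal J j) (pow_ideal M b)).
  elim=> [|j IH].
    by rewrite addn0 /= prod_TT_l //; apply: pow_ideal_is.
  rewrite addnS /=.
  apply: (subI_trans _ _ _ (prod_mono _ _ _ _ (fun x (h : M x) => h) IH)).
  rewrite -prod_assoc (prod_comm M) prod_assoc.
  have -> : prod_ideal M (pow_ideal M b) = pow_ideal M b.+1 by [].
  by rewrite hb -prod_assoc (prod_comm _ J).
split; first exact: (subI_trans _ _ _ hKJ hJM).
exists (a + b)%N; split; first by rewrite addn_gt0 a0.
suff -> : pow_ideal M (a + b).+1 = prod_ideal K (pow_ideal M (a + b)) by [].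
apply: subII.
- have -> : (a + b).+1 = (b + a.+1)%N by rewrite addnC addnS.
  apply: (subI_trans _ _ _ (powJ _)).
  have -> : pow_ideal J a.+1 = prod_ideal K (pow_ideal J a) by rewrite -ha.
  rewrite prod_assoc; apply: prod_mono => //.
  apply: (subI_trans _ _ _ _ (pow_add_sub _ _ _ hM)).
  by apply: prod_mono => //; apply: pow_mono.
- apply: prod_mono => //; exact: (subI_trans _ _ _ hKJ hJM).
Qed.

Lemma sum0 A B : A 0 -> B 0 -> sumI A B 0.
Proof. by move=> ha hb; exists 0, 0; rewrite addr0. Qed.

Lemma sum_add A B u v : (forall x y, A x -> A y -> A (x + y)) ->
  (forall x y, B x -> B y -> B (x + y)) -> sumI A B u -> sumI A B v -> sumI A B (u + v).
Proof.
move=> hA hB [a [b [ha [hb ->]]]] [a' [b' [ha' [hb' ->]]]].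
by exists (a + a'), (b + b'); split; [apply: hA|split; [apply: hB|rewrite addrACA]].
Qed.

Lemma sum_mono A A' B B' : subI A A' -> subI B B' -> subI (sumI A B) (sumI A' B').
Proof.
move=> hA hB x [a [b [ha [hb ->]]]]; exists a, b; split; [exact: hA|split; [exact: hB|by []]].
Qed.

Lemma sum_l A B : B 0 -> subI A (sumI A B).
Proof. by move=> hb x hx; exists x, 0; rewrite addr0. Qed.

Lemma distr A B C : subI (prod_ideal (sumI A B) C) (sumI (prod_ideal A C) (prod_ideal B C)).
Proof.
apply: prod_ind.
- by apply: sum0; apply: prod0.
- by move=> u v; apply: sum_add; apply: prod_add.
- move=> x c [a [b [ha [hb ->]]]] hc; exists (a * c), (b * c).
  by split; [apply: prod_mem|split; [apply: prod_mem|rewrite mulrDl]].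
Qed.

Lemma red_sum K' K L : L 0 -> K' 0 -> is_reduction K' K -> is_reduction (sumI K' L) (sumI K L).
Proof.
move=> hL0 hK'0 [hK'K [m [m0 /eqIP hm]]].
set M := sumI K L.
have hKM : subI K M by apply: sum_l.
have S : forall j, subI (pow_ideal M j.+1) (sumI (pow_ideal K j.+1) (prod_ideal L (pow_ideal M j))).
  elim=> [|j IH]; first exact: distr.
  apply: prod_ind.
  - by apply: sum0; apply: prod0.
  - by move=> u v; apply: sum_add; apply: prod_add.
  move=> x b [k [l [hk [hl ->]]]] hb.
  have [u [v [hu [hv ebv]]]] := IH _ hb.
  have hkv : prod_ideal L (pow_ideal M j.+1) (k * v).
    move: v hv {ebv}; apply: (prod_ind _ _ (fun v => prod_ideal L (pow_ideal M j.+1) (k * v))).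
    - by rewrite mulr0; apply: prod0.
    - by move=> v w hv hw; rewrite mulrDr; apply: prod_add.
    - move=> l' w hl' hw; rewrite mulrCA; apply: prod_mem => //.
      by apply: prod_mem => //; apply: hKM.
  exists (k * u), (k * v + l * b); split; first exact: prod_mem.
  split; last by rewrite mulrDl ebv mulrDr addrA.
  by apply: prod_add => //; apply: prod_mem.
split; first exact: (sum_mono _ _ _ _ hK'K (fun x h => h)).
exists m; split => //.
suff -> : pow_ideal M m.+1 = prod_ideal (sumI K' L) (pow_ideal M m) by [].
apply: subII.
- apply: (subI_trans _ _ _ (S m)).
  move=> x [u [v [hu [hv ->]]]]; apply: prod_add.
  + rewrite hm in hu; move: hu; apply: prod_mono; first exact: sum_l.
    exact: pow_mono.
  + move: hv; apply: prod_mono => // y hy; exists 0, y; rewrite add0r; split => //.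
- apply: prod_mono => //; exact: sum_mono.
Qed.

Lemma rad_mono A B : subI A B -> subI (rad A) (rad B).
Proof. by move=> h x [k hk]; exists k; apply: h. Qed.

Lemma rad_red K' K : is_ideal K' -> is_reduction K' K -> subI (rad K) (rad K').
Proof.
move=> hK' [_ [m [_ hm]]] x [k hk].
exists (k * m.+1)%N; rewrite exprM.
apply: (prod_in_l _ (pow_ideal K m) hK'); apply/hm; exact: pow_mem.
Qed.

Lemma sum_prin_ideal K y : is_ideal K -> is_ideal (sumI K (prin y)).
Proof.
move=> [h0 hD hM]; split.
- by apply: sum0 => //; exists 0; rewrite mul0r.
- move=> u v; apply: sum_add => // a b [r ->] [s ->]; exists (r + s); by rewrite mulrDl.
- move=> c x [a [b [ha [[r ->] ->]]]]; exists (c * a), ((c * r) * y); split; first exact: hM.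
  by split; [exists (c * r)|rewrite mulrDr mulrA].
Qed.

Lemma gen_ideal_is n (g : 'I_n -> R) : is_ideal (gen_ideal g).
Proof.
split.
- by exists (fun _ => 0); rewrite big1 // => i _; rewrite mul0r.
- move=> x y [c ->] [d ->]; exists (fun i => c i + d i).
  by rewrite -big_split; apply: eq_bigr => i _; rewrite mulrDl.
- move=> a x [c ->]; exists (fun i => a * c i).
  by rewrite big_distrr; apply: eq_bigr => i _ /=; rewrite mulrA.
Qed.

Lemma gen_sub n (g : 'I_n -> R) I : is_ideal I -> (forall i, I (g i)) -> subI (gen_ideal g) I.
Proof.
move=> [h0 hD hM] hg x [c ->]; apply: (big_ind I) => // i _; exact: hM.
Qed.

Definition ext n (g : 'I_n -> R) (y : R) : 'I_n.+1 -> R :=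
  fun i => if unlift ord_max i is Some j then g j else y.
Arguments ext {n}.

Lemma widen_lift n (i : 'I_n) : widen_ord (leqnSn n) i = lift ord_max i.
Proof. by apply: val_inj; rewrite /= /bump leqNgt ltn_ord. Qed.

Lemma ext_w n (g : 'I_n -> R) y i : ext g y (widen_ord (leqnSn n) i) = g i.
Proof. by rewrite /ext widen_lift liftK. Qed.

Lemma ext_m n (g : 'I_n -> R) y : ext g y ord_max = y.
Proof. by rewrite /ext unlift_none. Qed.

Lemma gen_ext n (g : 'I_n -> R) y : gen_ideal (ext g y) = sumI (gen_ideal g) (prin y).
Proof.
apply: subII.
- move=> x [c ->]; rewrite big_ord_recr /= ext_m.
  exists (\sum_(i < n) c (widen_ord (leqnSn n) i) * g i), (c ord_max * y).
  split; first by exists (fun i => c (widen_ord (leqnSn n) i)).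
  split; first by exists (c ord_max).
  by congr (_ + _); apply: eq_bigr => i _; rewrite ext_w.
- move=> x [a [b [[c ->] [[r ->] ->]]]].
  exists (ext c r); rewrite big_ord_recr /= !ext_m.
  by congr (_ + _); apply: eq_bigr => i _; rewrite !ext_w.
Qed.

Lemma sum_prin0 K : is_ideal K -> sumI K (prin 0) = K.
Proof.
move=> [h0 hD hM]; apply: subII.
- by move=> x [a [b [ha [[r ->] ->]]]]; rewrite mulr0 addr0.
- by apply: sum_l; exists 0; rewrite mulr0.
Qed.

Lemma ngen_mono m n K : (m <= n)%N -> n_generated m K -> n_generated n K.
Proof.
move=> /subnKC <-; elim: (n - m)%N => [|k IH]; first by rewrite addn0.
move=> /IH [g /eqIP hg]; rewrite addnS; exists (ext g 0); rewrite gen_ext -hg sum_prin0 //.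
by rewrite hg; apply: gen_ideal_is.
Qed.

Definition PP (I : R -> Prop) (n : nat) (K : R -> Prop) :=
  [/\ is_ideal K, subI K I, subI (rad I) (rad K) & has_n_gen_reduction n K].

Lemma stepP I n K y : is_ideal I ->
  (forall J : R -> Prop, is_ideal J -> n_generated n.+1 J -> subI J I ->
     eqI (rad J) (rad I) -> has_n_gen_reduction n J) ->
  PP I n K -> I y -> PP I n (sumI K (prin y)).
Proof.
move=> hI hyp [hK hKI hrad [K' [hK' [[g /eqIP hg] hred]]]] hy.
have hKsum : subI K (sumI K (prin y)) by apply: sum_l; exists 0; rewrite mul0r.
have hsumI : subI (sumI K (prin y)) I.
  case: hI => h0 hD hM.
  by move=> x [a [b [ha [[r ->] ->]]]]; apply: hD; [apply: hKI|apply: hM].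
split.
- exact: sum_prin_ideal.
- exact: hsumI.
- exact: (subI_trans _ _ _ hrad (rad_mono _ _ hKsum)).
set J := sumI K' (prin y).
have hJ : is_ideal J by apply: sum_prin_ideal.
have hJI : subI J I.
  apply: (subI_trans _ _ _ _ hsumI); apply: sum_mono => //; by case: hred.
have [K'' [hK'' [hgen hred'']]] : has_n_gen_reduction n J.
  apply: hyp => //.
  - by exists (ext g y); rewrite /J hg gen_ext.
  - move=> x; split; first exact: rad_mono.
    move=> hx; apply: (rad_mono K' J); first by apply: sum_l; exists 0; rewrite mul0r.
    by apply: (rad_red K' K) => //; apply: hrad.
exists K''; split => //; split => //.
apply: (red_trans K'' J) => //; first exact: sum_prin_ideal.
apply: red_sum => //; first by exists 0; rewrite mul0r.
by case: hK'.
Qed.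

End Aux.

Theorem lemma2p3 (R : comNzRingType) (I : R -> Prop) (n : nat) :
  noetherian R -> proper_ideal I -> ara_le I n ->
  (forall J : R -> Prop, is_ideal J -> n_generated n.+1 J -> subI J I ->
     eqI (rad J) (rad I) -> has_n_gen_reduction n J) ->
  has_n_gen_reduction n I.
Proof.
move=> hN [hI _] [m [hmn [x [hx hrad]]]] hyp.
have P0 : PP I n (gen_ideal x).
  split.
  - exact: gen_ideal_is.
  - exact: gen_sub.
  - by move=> z /hrad.
  - exists (gen_ideal x); split; first exact: gen_ideal_is.
    split; first by apply: (ngen_mono m) => //; exists x.
    by split => //; exists 1%N.
apply: NNPP => hno.
have H : forall s : {K | PP I n K}, {y | I y /\ ~ sval s y}.
  move=> [K hK] /=; apply: constructive_indefinite_description.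
  apply: NNPP => hne; apply: hno.
  have -> : I = K.
    apply: subII; last by case: hK.
    by move=> y hy; apply: NNPP => hy'; apply: hne; exists y.
  by case: hK.
pose step (s : {K | PP I n K}) : {K | PP I n K} :=
  exist _ (sumI (sval s) (prin (sval (H s))))
    (stepP I n (sval s) (sval (H s)) hI hyp (svalP s) (proj1 (svalP (H s)))).
pose f k := sval (iter k step (exist _ _ P0)).
have [N hNf] := hN f (fun k => match svalP (iter k step (exist _ _ P0)) with And4 h _ _ _ => h end)
  (fun k => ltac:(rewrite /f iterS /=; apply: sum_l; exists 0; rewrite mul0r; done)).
have := hNf N.+1 (leqnSn N); rewrite /f iterS /= => e.
set s := iter N step _ in e.
case: (svalP (H s)) => _; apply; apply/e.
by exists 0, (sval (H s)); split; [case: (svalP s) => [[]] | split; [exists 1; rewrite mul1r|rewrite add0r]].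
Qed.
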